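(* The group $\Gamma({A_1}_1)$ of permutations of $\mathbb Q\times\mathbb Z$ preserving the 1-codirection relation ${A_1}_1$ coincides with the set of all permutations of $\mathbb Q\times\mathbb Z$ that are either positive or negative.
   Context: $\mathbb Q\times\mathbb Z$ denotes the set $\mathbb Q\times\mathbb Z$ with the lexicographic order: $(r,z)<(r',z')$ iff $r<r'$, or $r=r'$ and $z<z'$. Relations defined on $\mathbb Z$ by first-order formulas in the signature $\{<\}$ are interpreted on $\mathbb Q\times\mathbb Z$ by the same formulas, and $\Gamma(R)$ is the group of permutations of $\mathbb Q\times\mathbb Z$ preserving $R$ (i.e. $R(\bar a)\iff R(g(\bar a))$). The 1-codirection relation is ${A_1}_1(x,y,z,t)\iff (x-y=z-t)\wedge|x-y|=1$, expressed in the order signature as: ($x$ is the immediate successor of $y$ and $z$ is the immediate successor of $t$) or ($y$ is the immediate successor of $x$ and $t$ is the immediate successor of $z$). A vertical is a set $\{r\}\times\mathbb Z$, $r\in\mathbb Q$. A permutation is systemic if it maps every vertical onto a vertical. A systemic permutation is positive if it preserves the order on each vertical (i.e. its restriction to each vertical is order preserving), and negative if it reverses the order on each vertical. *)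

(* Defs.v *)
From mathcomp Require Import all_boot all_order all_algebra.
Set Implicit Arguments. Unset Strict Implicit. Unset Printing Implicit Defensive.
Import Order.TTheory GRing.Theory Num.Theory.
Local Open Scope ring_scope.

Definition QZ : Type := (rat * int)%type.

Definition lexlt (a b : QZ) : Prop :=
  a.1 < b.1 \/ (a.1 = b.1 /\ a.2 < b.2).

Definition imm_succ (x y : QZ) : Prop :=
  lexlt y x /\ ~ (exists w : QZ, lexlt y w /\ lexlt w x).

Definition A11 (x y z t : QZ) : Prop :=
  (imm_succ x y /\ imm_succ z t) \/ (imm_succ y x /\ imm_succ t z).

Definition preserves4 (R : QZ -> QZ -> QZ -> QZ -> Prop) (g : QZ -> QZ) : Prop :=
  forall x y z t : QZ, R x y z t <-> R (g x) (g y) (g z) (g t).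

Definition vertical (r : rat) (p : QZ) : Prop := p.1 = r.

Definition systemic (g : QZ -> QZ) : Prop :=
  forall r : rat, exists r' : rat,
    (forall z : int, vertical r' (g (r, z))) /\
    (forall z' : int, exists z : int, g (r, z) = (r', z')).

Definition positive_perm (g : QZ -> QZ) : Prop :=
  systemic g /\
  forall (r : rat) (z1 z2 : int), z1 < z2 -> lexlt (g (r, z1)) (g (r, z2)).

Definition negative_perm (g : QZ -> QZ) : Prop :=
  systemic g /\
  forall (r : rat) (z1 z2 : int), z1 < z2 -> lexlt (g (r, z2)) (g (r, z1)).

(* Main.v *)
Require Import Defs.
From mathcomp Require Import all_boot all_order all_algebra.
From mathcomp Require Import zify ring lra.
Set Implicit Arguments. Unset Strict Implicit. Unset Printing Implicit Defensive.
Import Order.TTheory GRing.Theory Num.Theory.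
Local Open Scope ring_scope.

Definition succ (p : QZ) : QZ := (p.1, p.2 + 1).

Lemma imm_succE x y : imm_succ x y <-> x = succ y.
Proof.
case: x => x1 x2; case: y => y1 y2; rewrite /imm_succ /lexlt /succ /=.
split.
- move=> [Hlt Hno].
  have Hw : ~ (y1 < x1).
    move=> h; apply: Hno; exists (y1, y2 + 1) => /=; split; [right; split=> //; lia | by left].
  case: Hlt => [h|[e h]]; first by exfalso.
  subst x1.
  have Hw2 : ~ (y2 + 1 < x2).
    move=> h2; apply: Hno; exists (y1, y2 + 1) => /=; split; right; split=> //; lia.
  congr pair; lia.
- case=> -> ->; split; first by right; split=> //; lia.
  move=> [[w1 w2] /= [h1 h2]].
  case: h1 => [h1|[e1 h1]]; case: h2 => [h2|[e2 h2]].
  + by have := lt_trans h1 h2; rewrite ltxx.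
  + by move: h1; rewrite e2 ltxx.
  + by move: h2; rewrite e1 ltxx.
  + lia.
Qed.

Lemma A11E x y z t : A11 x y z t <-> (x = succ y /\ z = succ t) \/ (y = succ x /\ t = succ z).
Proof. by rewrite /A11 !imm_succE. Qed.

Lemma int_ind2 (P : int -> Prop) : P 0 -> (forall z, P z <-> P (z + 1)) -> forall z, P z.
Proof.
move=> P0 HS.
have Hp : forall n : nat, P n.
  elim=> // n IH; have -> : (n.+1)%:Z = n%:Z + 1 by lia.
  exact: (HS _).1 IH.
have Hn : forall n : nat, P (- n%:Z).
  elim=> // n IH; apply: (HS _).2; have -> : - (n.+1)%:Z + 1 = - n%:Z by lia.
  done.
case=> n; first exact: Hp.
rewrite NegzE; exact: Hn.
Qed.

Lemma incr_shift (f : int -> int) :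
  (forall z1 z2, z1 < z2 -> f z1 < f z2) -> (forall z', exists w, f w = z') ->
  forall z, f (z + 1) = f z + 1.
Proof.
move=> Hinc Hsur z.
have h1 : f z < f (z + 1) by apply: Hinc; lia.
have [w Hw] := Hsur (f z + 1).
case: (ltgtP w (z + 1)) => hw.
- case: (ltgtP w z) => hw2.
  + have := Hinc _ _ hw2; lia.
  + lia.
  + subst w; lia.
- have := Hinc _ _ hw; lia.
- by subst w.
Qed.

Ltac glia := repeat match goal with
 | H : context [(?f ?p).2] |- _ => revert H
 end; repeat match goal with
 | |- context [(?f ?p).2] => let x := fresh "x" in progress (set x := (f p).2); clearbody x
 end; intros; lia.

Theorem lemma1 (g : QZ -> QZ) (hg : bijective g) :
  preserves4 A11 g <-> (positive_perm g \/ negative_perm g).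
Proof.
have ginj : injective g by apply: bij_inj.
split.
- move=> H.
  have Hst : forall p q, g (succ p) = succ (g p) -> g q = succ (g (succ q)) -> False.
    move=> p q e1 e2.
    have := (H (succ p) p (succ q) q).1 ((A11E _ _ _ _).2 (or_introl (conj erefl erefl))).
    rewrite A11E; case=> [[_ e3]|[e3 _]].
    + move: e2; rewrite e3 /succ => /(congr1 snd) /=; glia.
    + move: e1; rewrite e3 /succ => /(congr1 snd) /=; glia.
  have Hor : forall p, g (succ p) = succ (g p) \/ g p = succ (g (succ p)).
    move=> p; have := (H (succ p) p (succ p) p).1 ((A11E _ _ _ _).2 (or_introl (conj erefl erefl))).
    rewrite A11E; case=> [[e _]|[e _]]; by [left|right].
  case: (Hor (0, 0)) => Hp0.
  + have gs : forall p, g (succ p) = succ (g p).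
      move=> p; case: (Hor p) => // e; exfalso; exact: (Hst _ _ Hp0 e).
    have form : forall r z, g (r, z) = ((g (r, 0)).1, (g (r, 0)).2 + z).
      move=> r; apply: int_ind2; first by rewrite addr0 -surjective_pairing.
      move=> z; have e := gs (r, z); rewrite /succ /= in e; rewrite e.
      split; first by move=> ->; congr pair; rewrite /= addrA.
      move=> h; have h1 := congr1 fst h; have h2 := congr1 snd h; simpl in h1, h2.
      rewrite (surjective_pairing (g (r, z))) h1; congr pair; glia.
    left; split.
    * move=> r; exists (g (r, 0)).1; split; first by move=> z; rewrite /vertical (form r z).
      move=> z'; exists (z' - (g (r, 0)).2); rewrite (form r (z' - _)); congr pair; glia.
    * move=> r z1 z2 h; rewrite (form r z1) (form r z2) /lexlt /=; right; split=> //; glia.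
  + have gs : forall p, g p = succ (g (succ p)).
      move=> p; case: (Hor p) => // e; exfalso; exact: (Hst _ _ e Hp0).
    have form : forall r z, g (r, z) = ((g (r, 0)).1, (g (r, 0)).2 - z).
      move=> r; apply: int_ind2; first by rewrite subr0 -surjective_pairing.
      move=> z; have e := gs (r, z); rewrite /succ /= in e.
      split.
      * move=> e2; rewrite e2 in e; have h1 := congr1 fst e; have h2 := congr1 snd e.
        simpl in h1, h2; rewrite (surjective_pairing (g (r, z + 1))) -h1; congr pair; glia.
      * move=> e2; rewrite e e2 /=; congr pair; glia.
    right; split.
    * move=> r; exists (g (r, 0)).1; split; first by move=> z; rewrite /vertical (form r z).
      move=> z'; exists ((g (r, 0)).2 - z'); rewrite (form r (_ - z')); congr pair; glia.
    * move=> r z1 z2 h; rewrite (form r z1) (form r z2) /lexlt /=; right; split=> //; glia.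
- have key : forall (s : int) , (s = 1 \/ s = -1) ->
      systemic g ->
      (forall r z1 z2, z1 < z2 -> s * (g (r, z1)).2 < s * (g (r, z2)).2) ->
      forall p, g (succ p) = ((g p).1, (g p).2 + s).
    move=> s hs Hsys Hinc [r z].
    have [r' [Hv Hs]] := Hsys r.
    pose f w := s * (g (r, w)).2.
    have Hsur : forall z', exists w, f w = z'.
      move=> z'; have [w Hw] := Hs (s * z'); exists w; rewrite /f Hw /=.
      by case: hs => ->; rewrite ?mul1r ?mulN1r ?opprK.
    have := @incr_shift f (Hinc r) Hsur z.
    rewrite /f /succ /= => e.
    have e1 := Hv (z + 1); have e2 := Hv z; rewrite /vertical in e1 e2.
    rewrite (surjective_pairing (g (r, z + 1))) e1 e2; congr pair.
    move: e; move: ((g (r, z + 1)).2) ((g (r, z)).2) => a b.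
    case: hs => ->; lia.
  case=> [[Hsys Hinc]|[Hsys Hinc]].
  + have gs := @key 1 (or_introl erefl) Hsys.
    have gs' : forall p, g (succ p) = succ (g p).
      move=> p; rewrite gs //.
      move=> r z1 z2 h; have := Hinc r z1 z2 h; rewrite /lexlt !mul1r.
      have [r' [Hv _]] := Hsys r; have := Hv z1; have := Hv z2; rewrite /vertical.
      move=> -> ->; case=> [|[]]; [by rewrite ltxx|done].
    have e : forall x y, x = succ y <-> g x = succ (g y).
      move=> x y; split; first by move=> ->.
      by rewrite -gs' => /ginj.
    move=> x y z t; rewrite !A11E (e x y) (e z t) (e y x) (e t z); tauto.
  + have gs := @key (-1) (or_intror erefl) Hsys.
    have gs' : forall p, g p = succ (g (succ p)).
      move=> p; rewrite gs.
        rewrite /succ /=; rewrite -addrA addNr addr0; apply: surjective_pairing.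
      move=> r z1 z2 h; have := Hinc r z1 z2 h; rewrite /lexlt.
      have [r' [Hv _]] := Hsys r; have := Hv z1; have := Hv z2; rewrite /vertical.
      move=> -> ->; case=> [|[_ h2]]; first by rewrite ltxx.
      glia.
    have e : forall x y, x = succ y <-> g y = succ (g x).
      move=> x y; split; first by move=> ->.
      by rewrite [g y]gs' => /esym /(congr1 (fun p => (p.1, p.2 - 1))) /=;
        rewrite /succ /= !addrK -!surjective_pairing => /ginj.
    move=> x y z t; rewrite !A11E (e x y) (e z t) (e y x) (e t z); tauto.
Qed.
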